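(* Let $W:\mathcal X\to\mathcal Y$ and $Q:\mathcal X\to\mathcal Z$ be DMCs with $W\preccurlyeq Q$, and fix an input distribution. Then $$I(Q)-I(W)\ \ge\ \sum_{z\in\mathcal Z}\frac12\sum_{y\in\mathcal A_z}\pi_y\|\mathbf z-\mathbf y\|_2^2 .$$
   Context: $\mathcal X,\mathcal Y,\mathcal Z$ are finite, pairwise disjoint. $W\preccurlyeq Q$ means there is a channel $\Phi:\mathcal Z\to\mathcal Y$ with $W(y|x)=\sum_zQ(z|x)\Phi(y|z)$. A fixed input distribution $\pi(x)>0$ induces output probabilities $\pi_y=\sum_x\pi(x)W(y|x)$ and $\pi_z=\sum_x\pi(x)Q(z|x)$ (assumed positive), and posterior vectors $\mathbf y=(y_x)_{x\in\mathcal X}$, $y_x=\pi(x)W(y|x)/\pi_y$, and $\mathbf z=(z_x)_{x\in\mathcal X}$, $z_x=\pi(x)Q(z|x)/\pi_z$. $I(\cdot)$ is input–output mutual information (natural log). For $z\in\mathcal Z$, $\mathcal A_z=\{y\in\mathcal Y: z=\arg\min_{z'\in\mathcal Z}\|\mathbf z'-\mathbf y\|_2^2\}$, where ties in the argmin are broken in a fixed arbitrary way, so that the sets $\mathcal A_z$ partition $\mathcal Y$; $\|\cdot\|_2$ is the Euclidean norm. *)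

(* Defs.v *)
(* Finite alphabets are represented as index ranges {0,...,n-1}:
   X = {0..nx-1}, Y = {0..ny-1}, Z = {0..nz-1}.  A channel W : X -> Y is a
   function W : nat -> nat -> R with W x y = W(y|x). *)
From Stdlib Require Import Reals List.
Import ListNotations.
Open Scope R_scope.

Definition rsum (n : nat) (f : nat -> R) : R :=
  fold_right Rplus 0 (map f (seq 0 n)).

Definition is_channel (nx ny : nat) (W : nat -> nat -> R) : Prop :=
  (forall x y, (x < nx)%nat -> (y < ny)%nat -> 0 <= W x y) /\
  (forall x, (x < nx)%nat -> rsum ny (fun y => W x y) = 1).

Definition degraded (nx ny nz : nat) (W Q : nat -> nat -> R) : Prop :=
  exists Phi : nat -> nat -> R,
    is_channel nz ny Phi /\
    forall x y, (x < nx)%nat -> (y < ny)%nat ->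
      W x y = rsum nz (fun z => Q x z * Phi z y).

Definition out_prob (nx : nat) (pi : nat -> R) (W : nat -> nat -> R) (y : nat) : R :=
  rsum nx (fun x => pi x * W x y).

Definition xlogxy (a b : R) : R :=
  if Req_EM_T a 0 then 0 else a * ln (a / b).

Definition mutual_info (nx ny : nat) (pi : nat -> R) (W : nat -> nat -> R) : R :=
  rsum nx (fun x => rsum ny (fun y =>
    pi x * xlogxy (W x y) (out_prob nx pi W y))).

Definition posterior (nx : nat) (pi : nat -> R) (W : nat -> nat -> R) (y x : nat) : R :=
  pi x * W x y / out_prob nx pi W y.

(* || z - y ||_2^2 between posterior vectors of z (for Q) and y (for W) *)
Definition post_dist2 (nx : nat) (pi : nat -> R) (W Q : nat -> nat -> R) (z y : nat) : R :=
  rsum nx (fun x => (posterior nx pi Q z x - posterior nx pi W y x) ^ 2).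

(* Main.v *)
Require Import Defs.
From Stdlib Require Import Reals List Arith Lra Lia.
From Coquelicot Require Import Coquelicot.
Import ListNotations.
Open Scope R_scope.
Lemma ln_lb u : 1 <= u -> 2*(u-1)/(u+1) <= ln u.
Proof.
intros Hu. destruct (Req_dec u 1) as [->|Hne].
{ rewrite ln_1. unfold Rdiv. lra. }
set (h := fun t => ln t - 2 + 4 * / (t+1)).
assert (D: forall c, 1 <= c <= u -> derivable_pt_lim h c (/c - 4 / (c+1)^2)).
{ intros c Hc. apply is_derive_Reals. unfold h.
  auto_derive. lra.
  field. lra. }
destruct (MVT_cor2 h _ 1 u ltac:(lra) D) as [c [E Hc]].
unfold h in E. rewrite ln_1 in E.
assert (0 <= (/ c - 4 / (c + 1) ^ 2) * (u - 1)).
{ apply Rmult_le_pos; [|lra].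
  replace (/ c - 4 / (c + 1) ^ 2) with ((c-1)^2 / (c * (c+1)^2)) by (field; lra).
  apply Rmult_le_pos. apply pow2_ge_0. left. apply Rinv_0_lt_compat. apply Rmult_lt_0_compat; try lra. apply pow_lt; lra. }
replace (2*(u-1)/(u+1)) with (2 - 4 * /(u+1)) by (field; lra).
lra.
Qed.
Lemma ln_ub v : 1 <= v -> ln v <= (v - /v)/2.
Proof.
intros Hv. destruct (Req_dec v 1) as [->|Hne].
{ rewrite ln_1. rewrite Rinv_1. lra. }
set (h := fun t => (t - /t)/2 - ln t).
assert (D: forall c, 1 <= c <= v -> derivable_pt_lim h c ((1 + /c^2)/2 - /c)).
{ intros c Hc. apply is_derive_Reals. unfold h.
  auto_derive. lra.
  field. lra. }
destruct (MVT_cor2 h _ 1 v ltac:(lra) D) as [c [E Hc]].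
unfold h in E. rewrite ln_1, Rinv_1 in E.
assert (0 <= ((1 + /c^2)/2 - /c) * (v - 1)).
{ apply Rmult_le_pos; [|lra].
  replace ((1 + /c^2)/2 - /c) with ((c-1)^2 / (2*c^2)) by (field; lra).
  apply Rmult_le_pos. apply pow2_ge_0. left. apply Rinv_0_lt_compat. apply Rmult_lt_0_compat; try lra. apply pow_lt; lra. }
lra.
Qed.
Lemma div_ge1 a b : 0 < b -> b <= a -> 1 <= a/b.
Proof. intros. apply (Rmult_le_reg_r b); [lra|]. unfold Rdiv. rewrite Rmult_assoc, Rinv_l, Rmult_1_r, Rmult_1_l; lra. Qed.
Lemma pw p q : 0 <= p <= 1 -> 0 <= q <= 1 -> (0 < p -> 0 < q) ->
  (p-q)^2/2 <= p * ln (p/q) - p + q.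
Proof.
intros Hp Hq Hpq. destruct (Rle_lt_or_eq_dec 0 p (proj1 Hp)) as [Hp0| <-]; swap 1 2.
{ rewrite Rmult_0_l. assert (q*q <= q) by nra. replace ((0-q)^2/2) with (q*q/2) by field. lra. }
assert (p>0) by lra. assert (q>0) by (apply Hpq; lra).
destruct (Rle_dec q p) as [Hle|Hlt].
- assert (L := ln_lb (p/q) ltac:(apply div_ge1; lra)).
  replace (2*(p/q-1)/(p/q+1)) with (2*(p-q)/(p+q)) in L by (field; lra).
  assert (p * (2*(p-q)/(p+q)) <= p * ln (p/q)) by (apply Rmult_le_compat_l; lra).
  assert (p*(2*(p-q)/(p+q)) - p + q = (p-q)^2/(p+q)) by (field; lra).
  assert ((p-q)^2/2 <= (p-q)^2/(p+q)).
  { apply Rmult_le_compat_l. apply pow2_ge_0. apply Rinv_le_contravar; lra. }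
  lra.
- assert (L := ln_ub (q/p) ltac:(apply div_ge1; lra)).
  assert (E: ln (p/q) = - ln (q/p)).
  { rewrite <- ln_Rinv by (apply Rdiv_lt_0_compat; lra). f_equal. field; lra. }
  rewrite E.
  replace ((q/p - /(q/p))/2) with ((q^2-p^2)/(2*p*q)) in L by (field; lra).
  assert (p * ln (q/p) <= p * ((q^2-p^2)/(2*p*q))) by (apply Rmult_le_compat_l; lra).
  assert (- (p * ((q^2-p^2)/(2*p*q))) - p + q = (p-q)^2/(2*q)) by (field; lra).
  assert ((p-q)^2/2 <= (p-q)^2/(2*q)).
  { apply Rmult_le_compat_l. apply pow2_ge_0. apply Rinv_le_contravar; lra. }
  lra.
Qed.
Lemma rsum_0n f : rsum 0 f = 0. Proof. reflexivity. Qed.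
Lemma rsum_S n f : rsum (S n) f = rsum n f + f n.
Proof. unfold rsum. rewrite seq_S, map_app, fold_right_app. simpl.
  generalize (map f (seq 0 n)). intros l. induction l; simpl; lra. Qed.
Lemma rsum_ext n f g : (forall i, (i < n)%nat -> f i = g i) -> rsum n f = rsum n g.
Proof. induction n; intros H; [reflexivity|]. rewrite !rsum_S, IHn, H; auto. Qed.
Lemma rsum_plus n f g : rsum n (fun i => f i + g i) = rsum n f + rsum n g.
Proof. induction n; [unfold rsum; simpl; lra|]. rewrite !rsum_S, IHn; lra. Qed.
Lemma rsum_minus n f g : rsum n (fun i => f i - g i) = rsum n f - rsum n g.
Proof. induction n; [unfold rsum; simpl; lra|]. rewrite !rsum_S, IHn; lra. Qed.
Lemma rsum_scal_l n c f : rsum n (fun i => c * f i) = c * rsum n f.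
Proof. induction n; [unfold rsum; simpl; lra|]. rewrite !rsum_S, IHn; lra. Qed.
Lemma rsum_scal_r n c f : rsum n (fun i => f i * c) = rsum n f * c.
Proof. induction n; [unfold rsum; simpl; lra|]. rewrite !rsum_S, IHn; lra. Qed.
Lemma rsum_const0 n : rsum n (fun _ => 0) = 0.
Proof. induction n; [reflexivity|]. rewrite rsum_S, IHn; lra. Qed.
Lemma rsum_le n f g : (forall i, (i < n)%nat -> f i <= g i) -> rsum n f <= rsum n g.
Proof. induction n; intros H; [unfold rsum; simpl; lra|]. rewrite !rsum_S.
  assert (f n <= g n) by auto. assert (rsum n f <= rsum n g) by auto. lra. Qed.
Lemma rsum_nonneg n f : (forall i, (i < n)%nat -> 0 <= f i) -> 0 <= rsum n f.
Proof. intros H. rewrite <- (rsum_const0 n). apply rsum_le; auto. Qed.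
Lemma rsum_swap n m (f : nat -> nat -> R) :
  rsum n (fun i => rsum m (fun j => f i j)) = rsum m (fun j => rsum n (fun i => f i j)).
Proof. induction n.
  - unfold rsum at 1; simpl. rewrite rsum_const0. reflexivity.
  - rewrite rsum_S, IHn, <- rsum_plus. apply rsum_ext; intros; rewrite rsum_S; lra. Qed.
Lemma rsum_term_le n f i : (forall j, (j < n)%nat -> 0 <= f j) -> (i < n)%nat -> f i <= rsum n f.
Proof. induction n; intros H Hi; [lia|]. rewrite rsum_S.
  destruct (Nat.eq_dec i n) as [->|Hne].
  - assert (0 <= rsum n f) by (apply rsum_nonneg; auto). lra.
  - assert (f i <= rsum n f) by (apply IHn; auto; lia). assert (0 <= f n) by auto. lra. Qed.
Lemma rsum_ind n a f : (a < n)%nat -> rsum n (fun z => if Nat.eqb a z then f z else 0) = f a.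
Proof. induction n; intros H; [lia|]. rewrite rsum_S.
  destruct (Nat.eq_dec a n) as [->|Hne].
  - rewrite Nat.eqb_refl. rewrite (rsum_ext _ _ (fun _ => 0)). rewrite rsum_const0; lra.
    intros i Hi. destruct (Nat.eqb_spec n i); [lia|auto].
  - rewrite IHn by lia. destruct (Nat.eqb_spec a n); [lia|lra]. Qed.

Lemma xlogxy_eq a b : xlogxy a b = a * ln (a / b).
Proof. unfold xlogxy. destruct (Req_EM_T a 0) as [->|]; lra. Qed.
Lemma post_le1 nx pi (W : nat -> nat -> R) y x :
  (forall x, (x < nx)%nat -> 0 < pi x) -> (forall x, (x < nx)%nat -> 0 <= W x y) ->
  0 < out_prob nx pi W y -> (x < nx)%nat ->
  0 <= posterior nx pi W y x <= 1.
Proof.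
intros Hpi HW HP Hx. unfold posterior.
assert (H1 : pi x * W x y <= out_prob nx pi W y).
{ apply (rsum_term_le nx (fun x => pi x * W x y)); auto.
  intros j Hj. apply Rmult_le_pos; [left; auto| auto]. }
assert (0 <= pi x * W x y) by (apply Rmult_le_pos; [left; auto| auto]).
split.
- apply Rmult_le_pos; auto. left; apply Rinv_0_lt_compat; auto.
- apply (Rmult_le_reg_r (out_prob nx pi W y)); auto. unfold Rdiv.
  rewrite Rmult_assoc, Rinv_l, Rmult_1_r, Rmult_1_l; lra.
Qed.

Lemma post_sum1 nx pi (W : nat -> nat -> R) y :
  0 < out_prob nx pi W y -> rsum nx (posterior nx pi W y) = 1.
Proof.
intros HP. unfold posterior.
rewrite (rsum_ext nx _ (fun x => (pi x * W x y) * / out_prob nx pi W y)) by (intros; reflexivity).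
rewrite rsum_scal_r. change (rsum nx (fun x => pi x * W x y)) with (out_prob nx pi W y).
field. lra.
Qed.

Lemma step4 nx ny nz (W Q Phi : nat -> nat -> R) pi z y :
  is_channel nx ny W -> is_channel nx nz Q -> is_channel nz ny Phi ->
  (forall x, (x < nx)%nat -> W x y = rsum nz (fun z' => Q x z' * Phi z' y)) ->
  (forall x, (x < nx)%nat -> 0 < pi x) -> 0 < out_prob nx pi W y -> 0 < out_prob nx pi Q z ->
  (z < nz)%nat -> (y < ny)%nat ->
  out_prob nx pi Q z * Phi z y * (/2 * post_dist2 nx pi W Q z y) <=
  rsum nx (fun x => pi x * Q x z * Phi z y *
     (ln (Q x z / out_prob nx pi Q z) - ln (W x y / out_prob nx pi W y))).
Proof.
intros [HW0 HW1] [HQ0 HQ1] [HF0 HF1] HWd Hpi HPW HPQ Hz Hy.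
set (PQ := out_prob nx pi Q z) in *. set (PW := out_prob nx pi W y) in *.
assert (Hphi : 0 <= Phi z y) by auto.
destruct (Rle_lt_or_eq_dec _ _ Hphi) as [Hp | He].
2:{ rewrite <- He. rewrite (rsum_ext _ _ (fun _ => 0)). rewrite rsum_const0. lra.
    intros; ring. }
set (p := posterior nx pi Q z). set (q := posterior nx pi W y).
assert (Wpos : forall x, (x < nx)%nat -> 0 < Q x z -> 0 < W x y).
{ intros x Hx HQx. rewrite HWd by auto.
  apply Rlt_le_trans with (Q x z * Phi z y). apply Rmult_lt_0_compat; auto.
  apply (rsum_term_le nz (fun z' => Q x z' * Phi z' y)); auto.
  intros j Hj. apply Rmult_le_pos; auto. }
rewrite (rsum_ext _ _ (fun x => PQ * Phi z y * (p x * ln (p x / q x)))).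
2:{ intros x Hx. unfold p, q, posterior. fold PQ PW.
  destruct (Rle_lt_or_eq_dec _ _ (HQ0 x z Hx Hz)) as [HQx| HQx].
  - assert (HWx := Wpos x Hx HQx). assert (Hpx := Hpi x Hx).
    replace (pi x * Q x z / PQ / (pi x * W x y / PW)) with ((Q x z / PQ) * / (W x y / PW))
      by (field; repeat split; lra).
    rewrite ln_mult, ln_Rinv.
    + field. lra.
    + apply Rdiv_lt_0_compat; lra.
    + apply Rdiv_lt_0_compat; lra.
    + apply Rinv_0_lt_compat, Rdiv_lt_0_compat; lra.
  - rewrite <- HQx. unfold Rdiv. ring. }
rewrite rsum_scal_l.
apply Rmult_le_compat_l. apply Rmult_le_pos; lra.
assert (Sp := post_sum1 nx pi Q z HPQ). assert (Sq := post_sum1 nx pi W y HPW).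
fold p in Sp. fold q in Sq.
replace (rsum nx (fun x => p x * ln (p x / q x)))
  with (rsum nx (fun x => (p x * ln (p x / q x) - p x) + q x) + rsum nx p - rsum nx q).
2:{ rewrite rsum_plus, rsum_minus. ring. }
rewrite Sp, Sq.
unfold post_dist2. fold p q. rewrite <- rsum_scal_l.
assert (rsum nx (fun x => / 2 * (p x - q x) ^ 2) <= rsum nx (fun x => p x * ln (p x / q x) - p x + q x)).
2: lra.
apply rsum_le. intros x Hx.
replace (/2 * (p x - q x)^2) with ((p x - q x)^2/2) by (unfold Rdiv; ring).
apply pw.
- apply post_le1; auto.
- apply post_le1; auto.
- intros Hpx. unfold q, posterior. fold PW.
  destruct (Rle_lt_or_eq_dec _ _ (HQ0 x z Hx Hz)) as [HQx| HQx].
  + apply Rdiv_lt_0_compat; auto. apply Rmult_lt_0_compat; auto.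
  + exfalso. unfold p, posterior in Hpx. rewrite <- HQx in Hpx. unfold Rdiv in Hpx. lra.
Qed.

Theorem lemma10 (nx ny nz : nat) (W Q : nat -> nat -> R) (pi : nat -> R)
  (a : nat -> nat) :
  is_channel nx ny W ->
  is_channel nx nz Q ->
  degraded nx ny nz W Q ->
  (forall x, (x < nx)%nat -> 0 < pi x) ->
  rsum nx pi = 1 ->
  (forall y, (y < ny)%nat -> 0 < out_prob nx pi W y) ->
  (forall z, (z < nz)%nat -> 0 < out_prob nx pi Q z) ->
  (forall y, (y < ny)%nat -> (a y < nz)%nat) ->
  (forall y z', (y < ny)%nat -> (z' < nz)%nat ->
     post_dist2 nx pi W Q (a y) y <= post_dist2 nx pi W Q z' y) ->
  mutual_info nx nz pi Q - mutual_info nx ny pi W >=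
  rsum nz (fun z => / 2 * rsum ny (fun y =>
     if Nat.eqb (a y) z then out_prob nx pi W y * post_dist2 nx pi W Q z y else 0)).
Proof.
intros HWc HQc [Phi [HFc HWd]] Hpi Hsum HPW HPQ Ha Hmin.
pose proof HWc as [HW0 HW1]. pose proof HQc as [HQ0 HQ1]. pose proof HFc as [HF0 HF1].
set (PQ := out_prob nx pi Q) in *. set (PW := out_prob nx pi W) in *.
assert (E1 : mutual_info nx nz pi Q = rsum nz (fun z => rsum ny (fun y => rsum nx (fun x =>
   pi x * Q x z * Phi z y * ln (Q x z / PQ z))))).
{ unfold mutual_info. fold PQ.
  rewrite (rsum_ext nx _ (fun x => rsum nz (fun z => rsum ny (fun y =>
   pi x * Q x z * Phi z y * ln (Q x z / PQ z))))).
  - rewrite rsum_swap. apply rsum_ext; intros z Hz. apply rsum_swap.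
  - intros x Hx. apply rsum_ext; intros z Hz. rewrite xlogxy_eq.
    rewrite (rsum_ext ny _ (fun y => Phi z y * (pi x * (Q x z * ln (Q x z / PQ z))))).
    + rewrite rsum_scal_r, HF1 by auto. ring.
    + intros; ring. }
assert (E2 : mutual_info nx ny pi W = rsum nz (fun z => rsum ny (fun y => rsum nx (fun x =>
   pi x * Q x z * Phi z y * ln (W x y / PW y))))).
{ unfold mutual_info. fold PW.
  rewrite (rsum_ext nx _ (fun x => rsum nz (fun z => rsum ny (fun y =>
   pi x * Q x z * Phi z y * ln (W x y / PW y))))).
  - rewrite rsum_swap. apply rsum_ext; intros z Hz. apply rsum_swap.
  - intros x Hx. rewrite <- rsum_swap. apply rsum_ext; intros y Hy. rewrite xlogxy_eq.
    rewrite (rsum_ext nz _ (fun z => (Q x z * Phi z y) * (pi x * ln (W x y / PW y)))).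
    + rewrite rsum_scal_r, <- HWd by auto. ring.
    + intros; ring. }
assert (EPW : forall y, (y < ny)%nat -> PW y = rsum nz (fun z => PQ z * Phi z y)).
{ intros y Hy. unfold PW, PQ, out_prob.
  rewrite (rsum_ext nx _ (fun x => rsum nz (fun z => pi x * Q x z * Phi z y))).
  - rewrite rsum_swap. apply rsum_ext; intros z Hz. rewrite <- rsum_scal_r. reflexivity.
  - intros x Hx. rewrite HWd by auto. rewrite <- rsum_scal_l. apply rsum_ext; intros; ring. }
assert (ER : rsum nz (fun z => / 2 * rsum ny (fun y =>
     if Nat.eqb (a y) z then PW y * post_dist2 nx pi W Q z y else 0)) =
   rsum ny (fun y => /2 * (PW y * post_dist2 nx pi W Q (a y) y))).
{ rewrite (rsum_ext nz _ (fun z => rsum ny (fun y =>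
     if Nat.eqb (a y) z then /2 * (PW y * post_dist2 nx pi W Q z y) else 0))).
  - rewrite rsum_swap. apply rsum_ext; intros y Hy.
    apply (rsum_ind nz (a y) (fun z => /2 * (PW y * post_dist2 nx pi W Q z y))). auto.
  - intros z Hz. rewrite <- rsum_scal_l. apply rsum_ext; intros y Hy.
    destruct (Nat.eqb (a y) z); ring. }
rewrite ER, E1, E2. apply Rle_ge.
rewrite <- rsum_minus.
apply Rle_trans with (rsum nz (fun z => rsum ny (fun y => PQ z * Phi z y * (/2 * post_dist2 nx pi W Q z y)))).
2:{ apply rsum_le; intros z Hz. rewrite <- rsum_minus. apply rsum_le; intros y Hy.
    rewrite <- rsum_minus.
    eapply Rle_trans. apply (step4 nx ny nz W Q Phi pi z y); auto.
    right. apply rsum_ext; intros. unfold PQ, PW; ring. }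
apply Rle_trans with (rsum nz (fun z => rsum ny (fun y => PQ z * Phi z y * (/2 * post_dist2 nx pi W Q (a y) y)))).
2:{ apply rsum_le; intros z Hz. apply rsum_le; intros y Hy.
    apply Rmult_le_compat_l. apply Rmult_le_pos; [left; auto| auto].
    apply Rmult_le_compat_l; [lra| auto]. }
rewrite rsum_swap. right. apply rsum_ext; intros y Hy.
rewrite EPW by auto. rewrite (rsum_scal_r nz (/2 * post_dist2 nx pi W Q (a y) y) (fun z => PQ z * Phi z y)). ring.
Qed.
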